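(* Fix $A,b,c$ and a base sequence $(B_1,\dots,B_N;\mathcal{K}_0,\mathcal{J}_0,\mathcal{K}_{N+1},\mathcal{J}_{N+1})$. Its validity region $\mathcal{T}$, i.e. the set of all $(\beta,\gamma,T)\in\mathbb{R}^K\times\mathbb{R}^J\times[0,\infty)$ for which the base sequence is optimal, is a convex polyhedral cone.
   Context: Let $A$ be a real $K\times J$ matrix, $b\in\mathbb{R}^K$, $c\in\mathbb{R}^J$; the remaining data of M-CLP are $\beta\in\mathbb{R}^K$, $\gamma\in\mathbb{R}^J$ and the horizon $T$. (M-CLP: maximize $\int_{0-}^T(\gamma+(T-t)c)^\top dU(t)$ over nonnegative, non-decreasing, right-continuous $U$ with $U(0-)=0$ subject to $AU(t)\le\beta+bt$, $0\le t\le T$; M-CLP$^*$: minimize $\int_{0-}^T(\beta+(T-t)b)^\top dP(t)$ over nonnegative non-decreasing right-continuous $P$, $P(0-)=0$, subject to $A^\top P(t)\ge\gamma+ct$.) Bases: index sets $\mathcal{K}\subseteq\{1..K\},\mathcal{J}\subseteq\{1..J\}$ such that $\dot x_k$ ($k\in\mathcal{K}$), $u_j$ ($j\notin\mathcal{J}$) are $K$ variables with independent columns in $[A\ I]$; primal basic solution solves $Au+\dot x=b$ with $u_j=0$ ($j\in\mathcal{J}$), $\dot x_k=0$ ($k\notin\mathcal{K}$); dual basic solution solves $A^\top p-\dot q=c$ with $p_k=0$ ($k\in\mathcal{K}$), $\dot q_j=0$ ($j\notin\mathcal{J}$). Admissible: $u,p\ge0$. Adjacent: one pivot apart, primal variable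 $v_n$ leaving from $B_n$ to $B_{n+1}$. A base sequence consists of admissible, consecutively adjacent bases $B_1..B_N$ (index sets $\mathcal{K}_n,\mathcal{J}_n$, rates $u^n,\dot x^n,p^n,\dot q^n$) plus index sets $\mathcal{K}_0,\mathcal{J}_0,\mathcal{K}_{N+1},\mathcal{J}_{N+1}$ with $\mathcal{K}_0\subseteq\mathcal{K}_1$, $\mathcal{J}_{N+1}\subseteq\mathcal{J}_N$ (these depend only on $A,b,c$). The base-sequence system for data $(\beta,\gamma,T)$ in unknowns $\mathbf{u}^0,\mathbf{u}^N,q^N,\mathbf{q}^0\in\mathbb{R}^J$, $x^0,\mathbf{x}^N,\mathbf{p}^0,\mathbf{p}^N\in\mathbb{R}^K$, $\tau_1..\tau_N$, with $x^n=x^0+\sum_{m\le n}\dot x^m\tau_m$, $q^n=q^N+\sum_{m>n}\dot q^m\tau_m$, is: (a) $x^n_k=0$ if $v_n=\dot x_k$, $q^n_j=0$ if $v_n=u_j$ ($n=1..N-1$); (b) $\sum\tau_n=T$; (c) $\mathbf{u}^0_j=0$ ($j\in\mathcal{J}_0$), $x^0_k=0$ ($k\notin\mathcal{K}_0$), $\mathbf{p}^0_k=0$ ($k\in\mathcal{K}_0$), $\mathbf{q}^0_j=0$ ($j\notin\mathcal{J}_0$), $\mathbf{p}^N_k=0$ ($k\in\mathcal{K}_{N+1}$), $q^N_j=0$ ($j\notin\mathcal{J}_{N+1}$), $\mathbf{u}^N_j=0$ ($j\in\mathcal{J}_{N+1}$), $\mathbf{x}^N_k=0$ ($k\notin\mathcal{K}_{N+1}$);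 (d) $A\mathbf{u}^0+x^0=\beta$, $A^\top\mathbf{p}^N-q^N=\gamma$; (e) $A\mathbf{u}^N+\mathbf{x}^N-x^N=0$, $A^\top\mathbf{p}^0-\mathbf{q}^0+q^0=0$. The base sequence is optimal for $(\beta,\gamma,T)$ if this system has a solution in which all boundary values, all $\tau_n$, and all $x^n,q^n$ ($n=0..N$) are nonnegative. *)

(* Defs.v *)
From HB Require Import structures.
From mathcomp Require Import all_boot all_order all_algebra.
Set Implicit Arguments. Unset Strict Implicit. Unset Printing Implicit Defensive.
Import Order.TTheory GRing.Theory Num.Theory.
Local Open Scope ring_scope.

Section MCLP.
Variables (R : realFieldType) (K J : nat).
Variables (A : 'M[R]_(K, J)) (b : 'cV[R]_K) (c : 'cV[R]_J).

Definition nonneg_cv n (v : 'cV[R]_n) : Prop := forall i, 0 <= v i 0.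

(* Primal variables: u_j (inl j) and xdot_k (inr k). *)
Definition pvar := ('I_J + 'I_K)%type.

Definition basic_vars (Ks : {set 'I_K}) (Js : {set 'I_J}) : {set pvar} :=
  [set v : pvar | match v with inl j => j \notin Js | inr k => k \in Ks end].

(* (Ks, Js) is a basis: the K variables xdot_k (k in Ks), u_j (j notin Js)
   are K in number and have linearly independent columns in [A I]. *)
Definition is_basis (Ks : {set 'I_K}) (Js : {set 'I_J}) : Prop :=
  (#|Ks| + #|~: Js| = K)%N /\
  forall (w : 'cV[R]_J) (y : 'cV[R]_K),
    (forall j, j \in Js -> w j 0 = 0) ->
    (forall k, k \notin Ks -> y k 0 = 0) ->
    A *m w + y = 0 -> w = 0 /\ y = 0.

Definition primal_basic_sol (Ks : {set 'I_K}) (Js : {set 'I_J}) (u : 'cV[R]_J) (xd : 'cV[R]_K) : Prop :=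
  A *m u + xd = b /\ (forall j, j \in Js -> u j 0 = 0) /\
  (forall k, k \notin Ks -> xd k 0 = 0).

Definition dual_basic_sol (Ks : {set 'I_K}) (Js : {set 'I_J}) (p : 'cV[R]_K) (qd : 'cV[R]_J) : Prop :=
  A^T *m p - qd = c /\ (forall k, k \in Ks -> p k 0 = 0) /\
  (forall j, j \notin Js -> qd j 0 = 0).

Definition adjacent_leaving (Ks1 Ks2 : {set 'I_K}) (Js1 Js2 : {set 'I_J}) (v : pvar) : Prop :=
  v \in basic_vars Ks1 Js1 /\
  exists w : pvar, w \notin basic_vars Ks1 Js1 /\
    basic_vars Ks2 Js2 = w |: (basic_vars Ks1 Js1 :\ v).

(* A base sequence: bases B_1..B_N given by (Ks n, Js n), n = 1..N, with rates
   u n, xd n, p n, qd n; pivot variables v n (n = 1..N-1) leaving from B_n to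
   B_{n+1}; plus boundary index sets Ks 0, Js 0, Ks (N+1), Js (N+1). *)
Definition base_sequence (N : nat) (Ks : nat -> {set 'I_K}) (Js : nat -> {set 'I_J})
    (v : nat -> pvar) (u : nat -> 'cV[R]_J) (xd : nat -> 'cV[R]_K)
    (p : nat -> 'cV[R]_K) (qd : nat -> 'cV[R]_J) : Prop :=
  (0 < N)%N /\
  (forall n, (1 <= n <= N)%N ->
     [/\ is_basis (Ks n) (Js n),
         primal_basic_sol (Ks n) (Js n) (u n) (xd n),
         dual_basic_sol (Ks n) (Js n) (p n) (qd n),
         nonneg_cv (u n) & nonneg_cv (p n)]) /\
  (forall n, (1 <= n < N)%N ->
     adjacent_leaving (Ks n) (Ks n.+1) (Js n) (Js n.+1) (v n)) /\
  Ks 0%N \subset Ks 1%N /\ Js N.+1 \subset Js N.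

Definition xstate (x0 : 'cV[R]_K) (xd : nat -> 'cV[R]_K) (tau : nat -> R) (n : nat)
  : 'cV[R]_K := x0 + \sum_(1 <= m < n.+1) tau m *: xd m.

Definition qstate (N : nat) (qN : 'cV[R]_J) (qd : nat -> 'cV[R]_J) (tau : nat -> R)
  (n : nat) : 'cV[R]_J := qN + \sum_(n.+1 <= m < N.+1) tau m *: qd m.

Definition bs_optimal (N : nat) (Ks : nat -> {set 'I_K}) (Js : nat -> {set 'I_J})
    (v : nat -> pvar) (xd : nat -> 'cV[R]_K) (qd : nat -> 'cV[R]_J)
    (beta : 'cV[R]_K) (gamma : 'cV[R]_J) (T : R) : Prop :=
  exists (u0 uN qN q0 : 'cV[R]_J) (x0 xN p0 pN : 'cV[R]_K) (tau : nat -> R),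
    let x := xstate x0 xd tau in
    let q := qstate N qN qd tau in
    (forall n, (1 <= n < N)%N ->
       (forall k, v n = inr k -> x n k 0 = 0) /\
       (forall j, v n = inl j -> q n j 0 = 0)) /\
    \sum_(1 <= n < N.+1) tau n = T /\
    (forall j, j \in Js 0%N -> u0 j 0 = 0) /\
    (forall k, k \notin Ks 0%N -> x0 k 0 = 0) /\
    (forall k, k \in Ks 0%N -> p0 k 0 = 0) /\
    (forall j, j \notin Js 0%N -> q0 j 0 = 0) /\
    (forall k, k \in Ks N.+1 -> pN k 0 = 0) /\
    (forall j, j \notin Js N.+1 -> qN j 0 = 0) /\
    (forall j, j \in Js N.+1 -> uN j 0 = 0) /\
    (forall k, k \notin Ks N.+1 -> xN k 0 = 0) /\
    A *m u0 + x0 = beta /\ A^T *m pN - qN = gamma /\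
    A *m uN + xN - x N = 0 /\ A^T *m p0 - q0 + q 0%N = 0 /\
    nonneg_cv u0 /\ nonneg_cv uN /\ nonneg_cv qN /\ nonneg_cv q0 /\
    nonneg_cv x0 /\ nonneg_cv xN /\ nonneg_cv p0 /\ nonneg_cv pN /\
    (forall n, (1 <= n <= N)%N -> 0 <= tau n) /\
    (forall n, (n <= N)%N -> nonneg_cv (x n) /\ nonneg_cv (q n)).

Definition validity_region (N : nat) (Ks : nat -> {set 'I_K}) (Js : nat -> {set 'I_J}) (v : nat -> pvar) (xd : nat -> 'cV[R]_K) (qd : nat -> 'cV[R]_J) (beta : 'cV[R]_K) (gamma : 'cV[R]_J) (T : R)
  : Prop := 0 <= T /\ bs_optimal N Ks Js v xd qd beta gamma T.

Definition polyhedral_cone (S : 'cV[R]_K -> 'cV[R]_J -> R -> Prop) : Prop :=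
  exists (m : nat) (M1 : 'M[R]_(m, K)) (M2 : 'M[R]_(m, J)) (M3 : 'cV[R]_m),
    forall beta gamma T,
      S beta gamma T <-> nonneg_cv (M1 *m beta + M2 *m gamma + T *: M3).

Definition convex3 (S : 'cV[R]_K -> 'cV[R]_J -> R -> Prop) : Prop :=
  forall b1 g1 T1 b2 g2 T2 (l : R), 0 <= l <= 1 ->
    S b1 g1 T1 -> S b2 g2 T2 ->
    S (l *: b1 + (1 - l) *: b2) (l *: g1 + (1 - l) *: g2) (l * T1 + (1 - l) * T2).

End MCLP.

(* Main.v *)
Require Import Defs.
From HB Require Import structures.
From mathcomp Require Import all_boot all_order all_algebra.
From mathcomp Require Import ring lra zify.
Require Stdlib.Lists.List.
Set Implicit Arguments. Unset Strict Implicit. Unset Printing Implicit Defensive.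
Import Order.TTheory GRing.Theory Num.Theory.
Local Open Scope ring_scope.
Section G.
Variable R : realFieldType.

Definition holds (X : Type) (s : seq (X -> R)) (x : X) :=
  forall f, List.In f s -> 0 <= f x.

Definition lin (V : lmodType R) (f : V -> R) :=
  forall a x y, f (a *: x + y) = a * f x + f y.

Definition linv (V W : lmodType R) (f : V -> W) :=
  forall a x y, f (a *: x + y) = a *: f x + f y.

Definition polyh (V : lmodType R) (P : V -> Prop) :=
  exists s : seq (V -> R), (forall f, List.In f s -> lin f) /\
    forall x, P x <-> holds s x.

Lemma sandwich (ls us : seq R) :
  (forall l u, List.In l ls -> List.In u us -> l <= u) ->
  exists t, (forall l, List.In l ls -> l <= t) /\ (forall u, List.In u us -> t <= u).
Proof.
elim: ls => [|l ls IH] H.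
- elim: us H => [|u us IHu] H.
  + by exists 0; split => ? [].
  + have [t [_ Ht]] := IHu (fun l u' (hl : List.In l [::]) _ => match hl with end).
    exists (Order.min t u); split => [? []|u' [<-|hu]].
    * by rewrite ge_min lexx orbT.
    * by rewrite ge_min Ht.
- have [t [Hl Hu]] := IH (fun l' u hl hu => H l' u (or_intror hl) hu).
  exists (Order.max t l); split => [l' [<-|hl]|u hu].
  + by rewrite le_max lexx orbT.
  + by rewrite le_max Hl.
  + by rewrite ge_max Hu // H //; left.
Qed.

Lemma aux_bound (a b p q : R) : 0 < a -> b < 0 -> 0 <= - b * p + a * q ->
  - p / a <= - q / b.
Proof.
move=> ha hb h.
have an : a != 0 by rewrite gt_eqF.
have bn : b != 0 by rewrite lt_eqF.
rewrite -subr_ge0.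
have -> : - q / b - - p / a = (- b * p + a * q) / (a * - b) by field; rewrite an bn.
apply: divr_ge0 => //; apply: mulr_ge0; [exact: ltW | rewrite oppr_ge0; exact: ltW].
Qed.

Lemma fm (X : Type) (L : (X -> R) -> Prop)
  (HL : forall g1 g2 a b, L g1 -> L g2 -> L (fun x => a * g1 x + b * g2 x))
  (s : seq ((X -> R) * R)) :
  (forall e, List.In e s -> L e.1) ->
  exists s' : seq (X -> R), (forall g, List.In g s' -> L g) /\
   forall x, (exists t, forall e, List.In e s -> 0 <= e.1 x + e.2 * t) <-> holds s' x.
Proof.
move=> Hs.
pose s0 := List.map fst (List.filter (fun e : (X -> R) * R => e.2 == 0) s).
pose sp := List.filter (fun e : (X -> R) * R => 0 < e.2) s.
pose sn := List.filter (fun e : (X -> R) * R => e.2 < 0) s.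
pose comb (ep en : (X -> R) * R) := fun x => (- en.2) * ep.1 x + ep.2 * en.1 x.
exists (s0 ++ List.flat_map (fun ep => List.map (comb ep) sn) sp).
split.
- move=> g /List.in_app_iff [/List.in_map_iff [e [<- /List.filter_In [he _]]]|].
  + exact: Hs.
  + move=> /List.in_flat_map [ep [/List.filter_In [hp _] /List.in_map_iff [en [<- /List.filter_In [hn _]]]]].
    exact: HL (Hs _ hp) (Hs _ hn).
- move=> x; split.
  + move=> [t Ht] g /List.in_app_iff [/List.in_map_iff [e [<- /List.filter_In [he /eqP e0]]]|].
    * by have := Ht e he; rewrite e0 mul0r addr0.
    * move=> /List.in_flat_map [ep [/List.filter_In [hp p0] /List.in_map_iff [en [<- /List.filter_In [hn n0]]]]].
      have h1 := Ht _ hp; have h2 := Ht _ hn; rewrite /comb.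
      have -> : - en.2 * ep.1 x + ep.2 * en.1 x =
         (- en.2) * (ep.1 x + ep.2 * t) + ep.2 * (en.1 x + en.2 * t) by ring.
      apply: addr_ge0; apply: mulr_ge0 => //; first (rewrite oppr_ge0); exact: ltW.
  + move=> H.
    have := @sandwich
      (List.map (fun ep : (X -> R) * R => - ep.1 x / ep.2) sp)
      (List.map (fun en : (X -> R) * R => - en.1 x / en.2) sn).
    case.
    * move=> l u /List.in_map_iff [ep [<- /List.filter_In [hp p0]]]
                /List.in_map_iff [en [<- /List.filter_In [hn n0]]].
      apply: aux_bound => //.
      apply: (H (comb ep en)); apply/List.in_app_iff; right; apply/List.in_flat_map.
      exists ep; split; first by apply/List.filter_In.
      by apply/List.in_map_iff; exists en; split => //; apply/List.filter_In.
    move=> t [Hl Hu].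
    exists t => e he.
      case: (ltgtP e.2 0) => [en|ep|e0].
      - have := Hu (- e.1 x / e.2); rewrite List.in_map_iff => /(_ (ex_intro _ e (conj erefl _))).
        move=> /(_ (proj2 (List.filter_In _ _ _) (conj he en))) h.
        have ne : e.2 != 0 by rewrite lt_eqF.
        have -> : e.1 x + e.2 * t = (- e.2) * (- e.1 x / e.2 - t) by field.
        apply: mulr_ge0; [rewrite oppr_ge0 ltW // | by rewrite subr_ge0].
      - have := Hl (- e.1 x / e.2); rewrite List.in_map_iff => /(_ (ex_intro _ e (conj erefl _))).
        move=> /(_ (proj2 (List.filter_In _ _ _) (conj he ep))) h.
        have ne : e.2 != 0 by rewrite gt_eqF.
        have -> : e.1 x + e.2 * t = e.2 * (t - - e.1 x / e.2) by field.
        apply: mulr_ge0; [rewrite ltW // | by rewrite subr_ge0].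
      - rewrite e0 mul0r addr0.
        apply: (H e.1); apply/List.in_app_iff; left; apply/List.in_map_iff.
        exists e; split => //; apply/List.filter_In; split => //; exact/eqP.
Qed.

Lemma InE (T : eqType) (x : T) (s : seq T) : List.In x s <-> x \in s.
Proof.
elim: s => [|y s IH] /=; first by split.
rewrite in_cons; split.
- by case=> [->|/IH ->]; rewrite ?eqxx ?orbT.
- by case/orP => [/eqP ->|/IH]; [left|right].
Qed.

Section Lin.
Variable V : lmodType R.

Lemma lin0 (f : V -> R) : lin f -> f 0 = 0.
Proof. move=> h; have := h 1 0 0; rewrite scale1r addr0 mul1r => /eqP.
rewrite -subr_eq0 opprD addrA subrr add0r oppr_eq0 => /eqP //. Qed.

Lemma linD (f : V -> R) : lin f -> forall x y, f (x + y) = f x + f y.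
Proof. by move=> h x y; have := h 1 x y; rewrite scale1r mul1r. Qed.

Lemma linZ (f : V -> R) : lin f -> forall a x, f (a *: x) = a * f x.
Proof. by move=> h a x; have := h a x 0; rewrite (lin0 h) !addr0. Qed.

Lemma lin_sum (f : V -> R) (I : Type) (r : seq I) (F : I -> V) :
  lin f -> f (\sum_(i <- r) F i) = \sum_(i <- r) f (F i).
Proof.
move=> h; elim: r => [|i r IH]; first by rewrite !big_nil lin0.
by rewrite !big_cons linD // IH.
Qed.

Lemma lin_comb (g1 g2 : V -> R) a b : lin g1 -> lin g2 ->
  lin (fun x => a * g1 x + b * g2 x).
Proof. by move=> h1 h2 c x y; rewrite h1 h2; ring. Qed.

Lemma polyh_ext (P Q : V -> Prop) : polyh P -> (forall x, P x <-> Q x) -> polyh Q.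
Proof. by move=> [s [Hl He]] H; exists s; split => // x; rewrite -H. Qed.

Lemma polyh_true : polyh (fun _ : V => True).
Proof. by exists [::]; split => // x; split => // _ f []. Qed.

Lemma polyh_and (P Q : V -> Prop) : polyh P -> polyh Q -> polyh (fun x => P x /\ Q x).
Proof.
move=> [s [Hl He]] [s' [Hl' He']]; exists (s ++ s'); split.
- by move=> f /List.in_app_iff [/Hl|/Hl'].
- move=> x; rewrite He He'; split.
  + by move=> [h1 h2] f /List.in_app_iff [/h1|/h2].
  + by move=> h; split => f hf; apply: h; apply/List.in_app_iff; [left|right].
Qed.

Lemma polyh_ge (f g : V -> R) : lin f -> lin g -> polyh (fun x => f x <= g x).
Proof.
move=> hf hg; exists [:: fun x => 1 * g x + (-1) * f x]; split.
- by move=> h [<-|[]]; apply: lin_comb.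
- move=> x; split.
  + by move=> h k [<-|[]]; rewrite mul1r mulN1r subr_ge0.
  + by move=> h; have := h _ (or_introl erefl); rewrite mul1r mulN1r subr_ge0.
Qed.

Lemma polyh_eq (f g : V -> R) : lin f -> lin g -> polyh (fun x => f x = g x).
Proof.
move=> hf hg; apply: polyh_ext (polyh_and (polyh_ge hf hg) (polyh_ge hg hf)) _.
by move=> x; split => [[h1 h2]|->]; [apply/eqP; rewrite eq_le h1 h2|].
Qed.

Lemma polyh_imp (b : bool) (P : V -> Prop) : polyh P -> polyh (fun x => b -> P x).
Proof.
case: b => h.
- by apply: polyh_ext h _ => x; split => // /(_ erefl).
- by apply: polyh_ext polyh_true _ => x; split.
Qed.

Lemma polyh_forall_seq (I : Type) (r : seq I) (P : I -> V -> Prop) :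
  (forall i, polyh (P i)) -> polyh (fun x => forall i, List.In i r -> P i x).
Proof.
move=> H; elim: r => [|i r IH].
- by apply: polyh_ext polyh_true _ => x; split => // _ ? [].
- apply: polyh_ext (polyh_and (H i) IH) _ => x; split.
  + by move=> [h1 h2] j [<-|/h2].
  + by move=> h; split => [|j hj]; apply: h; [left|right].
Qed.

Lemma polyh_forall_fin (I : finType) (P : I -> V -> Prop) :
  (forall i, polyh (P i)) -> polyh (fun x => forall i, P i x).
Proof.
move=> H; apply: polyh_ext (polyh_forall_seq (enum I) H) _ => x; split.
- by move=> h i; apply: h; apply/InE; rewrite mem_enum.
- by move=> h i _.
Qed.

Lemma polyh_forall_nat (m : nat) (pb : pred nat) (P : nat -> V -> Prop) :
  (forall n, pb n -> (n < m)%N) -> (forall n, polyh (P n)) ->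
  polyh (fun x => forall n, pb n -> P n x).
Proof.
move=> hb H.
have H' : forall n, polyh (fun x => pb n -> P n x) by move=> n; apply: polyh_imp.
apply: polyh_ext (polyh_forall_seq (iota 0 m) H') _ => x; split.
- by move=> h n hn; apply: h => //; apply/InE; rewrite mem_iota add0n hb.
- by move=> h n _; exact: h.
Qed.

End Lin.

Lemma lin_comp (V W : lmodType R) (phi : V -> W) (f : W -> R) :
  linv phi -> lin f -> lin (fun w => f (phi w)).
Proof. by move=> hp hf a x y; rewrite hp hf. Qed.

Lemma polyh_comp (V W : lmodType R) (phi : V -> W) (P : W -> Prop) :
  linv phi -> polyh P -> polyh (fun w => P (phi w)).
Proof.
move=> hp [s [Hl He]]; exists (List.map (fun f => fun w => f (phi w)) s); split.
- by move=> g /List.in_map_iff [f [<- hf]]; apply: lin_comp => //; apply: Hl.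
- move=> w; rewrite He; split.
  + by move=> h g /List.in_map_iff [f [<- hf]]; apply: h.
  + by move=> h f hf; apply: (h (fun w => f (phi w))); apply/List.in_map_iff; exists f.
Qed.

Lemma polyh_exR (V : lmodType R) (P : (V * R^o)%type -> Prop) :
  polyh P -> polyh (fun x : V => exists t : R, P (x, t)).
Proof.
move=> [s [Hl He]].
have dec : forall f : (V * R^o)%type -> R, lin f -> forall (x : V) (t : R), f (x, t) = f (x, 0) + f (0, 1) * t.
  move=> f hf x t.
  have -> : (x, t) = t *: ((0 : V), (1 : R^o)) + (x, (0 : R^o)).
    change ((x, t) = (t *: 0 + x, t * 1 + 0)); by rewrite scaler0 add0r mulr1 addr0.
  by rewrite hf addrC mulrC.
have linx : forall f : (V * R^o)%type -> R, lin f -> lin (fun x : V => f (x, 0)).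
  move=> f hf a x y.
  have -> : (a *: x + y, (0 : R^o)) = a *: (x, (0 : R^o)) + (y, 0).
    change ((a *: x + y, (0 : R^o)) = (a *: x + y, a * 0 + 0)); by rewrite mulr0 addr0.
  by rewrite hf.
have [s' [Hl' He']] := @fm V (@lin V) (fun g1 g2 a b h1 h2 => lin_comb a b h1 h2)
   (List.map (fun f => (fun x => f (x, 0), f (0, 1))) s)
   (fun e he => match proj1 (List.in_map_iff _ _ _) he with
                | ex_intro f (conj ef hf) => ltac:(rewrite -ef; exact: linx (Hl _ hf)) end).
exists s'; split => // x; rewrite -He'; split.
- move=> [t /He Ht]; exists t => e /List.in_map_iff [f [<- hf]] /=.
  by rewrite -(dec f (Hl f hf)); apply: Ht.
- move=> [t Ht]; exists t; apply/He => f hf; rewrite (dec f (Hl f hf)).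
  by apply: (Ht (fun x => f (x, 0), f (0, 1))); apply/List.in_map_iff; exists f.
Qed.

Lemma polyh_exV n : forall (V : lmodType R) (P : (V * 'cV[R]_n)%type -> Prop),
  polyh P -> polyh (fun x => exists y, P (x, y)).
Proof.
elim: n => [|n IH] V P HP.
- have hl : linv (fun x : V => (x, (0 : 'cV[R]_0))).
    move=> a x y; change ((a *: x + y, (0 : 'cV[R]_0)) = (a *: x + y, a *: 0 + 0)).
    by rewrite scaler0 addr0.
  apply: polyh_ext (polyh_comp hl HP) _ => x; split => [h|[y]].
  + by exists 0.
  + by rewrite (flatmx0 y).
- pose phi (w : ((V * 'cV[R]_n) * R^o)%type) : (V * 'cV[R]_n.+1)%type :=
    (w.1.1, col_mx (w.2 : R)%:M w.1.2).
  have hl : linv phi.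
    move=> a x y; rewrite /phi.
    change ((a *: x.1.1 + y.1.1, col_mx (a * x.2 + y.2)%:M (a *: x.1.2 + y.1.2)) =
            (a *: x.1.1 + y.1.1, a *: col_mx (x.2 : R)%:M x.1.2 + col_mx (y.2 : R)%:M y.1.2)).
    by rewrite scale_col_mx add_col_mx scale_scalar_mx raddfD.
  have H3 := IH _ _ (polyh_exR (polyh_comp hl HP)).
  apply: polyh_ext H3 _ => x /=; split.
  + move=> [y [t Pt]]; by exists (col_mx (t : R)%:M y).
  + move=> [y Py]; exists (@dsubmx _ 1 n 1 y); exists (@usubmx _ 1 n 1 y 0 0).
    rewrite /phi /= -mx11_scalar vsubmxK; exact: Py.
Qed.

End G.

Section L.
Variables (R : realFieldType) (V : lmodType R).

Lemma linv_mul m n p (M : 'M[R]_(m, n)) (F : V -> 'M[R]_(n, p)) :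
  linv F -> linv (fun w => M *m F w).
Proof. by move=> h a x y; rewrite h mulmxDr scalemxAr. Qed.

Lemma linv_add (W : lmodType R) (F G : V -> W) :
  linv F -> linv G -> linv (fun w => F w + G w).
Proof. move=> hF hG a x y; rewrite hF hG scalerDr.
by rewrite -!addrA; congr (_ + _); rewrite addrC -!addrA; congr (_ + _); rewrite addrC. Qed.

Lemma linv_sub (W : lmodType R) (F G : V -> W) :
  linv F -> linv G -> linv (fun w => F w - G w).
Proof. move=> hF hG a x y; rewrite hF hG scalerBr opprD.
by rewrite -!addrA; congr (_ + _); rewrite addrC -!addrA; congr (_ + _); rewrite addrC. Qed.

Lemma linv_0 (W : lmodType R) : linv (fun _ : V => (0 : W)).
Proof. by move=> a x y; rewrite scaler0 addr0. Qed.

Lemma linv_sum (W : lmodType R) (I : Type) (r : seq I) (F : I -> V -> W) :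
  (forall i, linv (F i)) -> linv (fun w => \sum_(i <- r) F i w).
Proof.
move=> h a x y; rewrite scaler_sumr -big_split /=.
by apply: eq_bigr => i _; rewrite h.
Qed.

Lemma linv_scalev m n (g : V -> R) (M : 'M[R]_(m, n)) :
  lin g -> linv (fun w => g w *: M).
Proof. by move=> h a x y; rewrite h scalerDl scalerA. Qed.

Lemma lin_entry m n (F : V -> 'M[R]_(m, n)) i j :
  linv F -> lin (fun w => F w i j).
Proof. by move=> h a x y; rewrite h !mxE. Qed.

Lemma lin_const0 : lin (fun _ : V => (0 : R)).
Proof. by move=> a x y; rewrite mulr0 addr0. Qed.

Lemma lin_sumr (I : Type) (r : seq I) (F : I -> V -> R) :
  (forall i, lin (F i)) -> lin (fun w => \sum_(i <- r) F i w).
Proof.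
move=> h a x y; rewrite mulr_sumr -big_split /=.
by apply: eq_bigr => i _; rewrite h.
Qed.

Lemma lin_cmul (c : R) (g : V -> R) : lin g -> lin (fun w => c * g w).
Proof. by move=> h a x y; rewrite h; ring. Qed.

Lemma polyh_mxeq m n (F G : V -> 'M[R]_(m, n)) :
  linv F -> linv G -> polyh (fun w => F w = G w).
Proof.
move=> hF hG.
have H : polyh (fun w => forall i j, F w i j = G w i j).
  apply: polyh_forall_fin => i; apply: polyh_forall_fin => j.
  by apply: polyh_eq; apply: lin_entry.
by apply: polyh_ext H _ => w; split => [h|->//]; apply/matrixP.
Qed.

Lemma polyh_nonneg n (F : V -> 'cV[R]_n) : linv F -> polyh (fun w => nonneg_cv (F w)).
Proof.
move=> hF; apply: polyh_forall_fin => i.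
by apply: polyh_ge; [apply: lin_const0 | apply: lin_entry].
Qed.

Lemma polyh_imp_eq (T : eqType) (a b : T) (P : V -> Prop) :
  polyh P -> polyh (fun w => a = b -> P w).
Proof.
move=> h; apply: polyh_ext (polyh_imp (a == b) h) _ => w.
by split => H /eqP; apply: H.
Qed.

End L.

Section P.
Variables (R : realFieldType) (K J : nat) (A : 'M[R]_(K, J)) (N : nat)
  (Ks : nat -> {set 'I_K}) (Js : nat -> {set 'I_J}) (v : nat -> pvar K J)
  (xd : nat -> 'cV[R]_K) (qd : nat -> 'cV[R]_J).

Definition Phi (beta : 'cV[R]_K) (gamma : 'cV[R]_J) (T : R)
  (u0 uN qN q0 : 'cV[R]_J) (x0 xN p0 pN : 'cV[R]_K) (tau : nat -> R) : Prop :=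
    let x := xstate x0 xd tau in
    let q := qstate N qN qd tau in
    (forall n, (1 <= n < N)%N ->
       (forall k, v n = inr k -> x n k 0 = 0) /\
       (forall j, v n = inl j -> q n j 0 = 0)) /\
    \sum_(1 <= n < N.+1) tau n = T /\
    (forall j, j \in Js 0%N -> u0 j 0 = 0) /\
    (forall k, k \notin Ks 0%N -> x0 k 0 = 0) /\
    (forall k, k \in Ks 0%N -> p0 k 0 = 0) /\
    (forall j, j \notin Js 0%N -> q0 j 0 = 0) /\
    (forall k, k \in Ks N.+1 -> pN k 0 = 0) /\
    (forall j, j \notin Js N.+1 -> qN j 0 = 0) /\
    (forall j, j \in Js N.+1 -> uN j 0 = 0) /\
    (forall k, k \notin Ks N.+1 -> xN k 0 = 0) /\
    A *m u0 + x0 = beta /\ A^T *m pN - qN = gamma /\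
    A *m uN + xN - x N = 0 /\ A^T *m p0 - q0 + q 0%N = 0 /\
    nonneg_cv u0 /\ nonneg_cv uN /\ nonneg_cv qN /\ nonneg_cv q0 /\
    nonneg_cv x0 /\ nonneg_cv xN /\ nonneg_cv p0 /\ nonneg_cv pN /\
    (forall n, (1 <= n <= N)%N -> 0 <= tau n) /\
    (forall n, (n <= N)%N -> nonneg_cv (x n) /\ nonneg_cv (q n)).

Lemma bsE beta gamma T : bs_optimal A N Ks Js v xd qd beta gamma T <->
  exists u0 uN qN q0 x0 xN p0 pN tau, Phi beta gamma T u0 uN qN q0 x0 xN p0 pN tau.
Proof. exact: iff_refl. Qed.

Lemma polyh_Phi (V : lmodType R) (fb : V -> 'cV[R]_K) (fg : V -> 'cV[R]_J) (fT : V -> R)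
  (fu0 fuN fqN fq0 : V -> 'cV[R]_J) (fx0 fxN fp0 fpN : V -> 'cV[R]_K) (ft : V -> nat -> R) :
  linv fb -> linv fg -> lin fT -> linv fu0 -> linv fuN -> linv fqN -> linv fq0 ->
  linv fx0 -> linv fxN -> linv fp0 -> linv fpN -> (forall m, lin (fun w => ft w m)) ->
  polyh (fun w => Phi (fb w) (fg w) (fT w) (fu0 w) (fuN w) (fqN w) (fq0 w)
                     (fx0 w) (fxN w) (fp0 w) (fpN w) (ft w)).
Proof.
move=> hb hg hT hu0 huN hqN hq0 hx0 hxN hp0 hpN ht.
have hX : forall n, linv (fun w => xstate (fx0 w) xd (ft w) n).
  move=> n; rewrite /xstate; apply: linv_add => //; apply: linv_sum => m.
  exact: linv_scalev.
have hQ : forall n, linv (fun w => qstate N (fqN w) qd (ft w) n).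
  move=> n; rewrite /qstate; apply: linv_add => //; apply: linv_sum => m.
  exact: linv_scalev.
rewrite /Phi.
apply: polyh_and.
  apply: (@polyh_forall_nat _ _ N.+1 (fun n => (1 <= n < N)%N)); first by move=> n; lia.
  move=> n; apply: polyh_and; apply: polyh_forall_fin => i; apply: polyh_imp_eq;
    (apply: polyh_eq; [apply: lin_entry | apply: lin_const0]); by [].
apply: polyh_and; first by apply: polyh_eq => //; apply: lin_sumr.
do 8 (apply: polyh_and; first by
  apply: polyh_forall_fin => i; apply: polyh_imp;
  apply: polyh_eq; [apply: lin_entry | apply: lin_const0]).
apply: polyh_and; first by apply: polyh_mxeq => //; apply: linv_add => //; apply: linv_mul.
apply: polyh_and; first by apply: polyh_mxeq => //; apply: linv_sub => //; apply: linv_mul.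
apply: polyh_and; first by apply: polyh_mxeq; [apply: linv_sub => //; apply: linv_add => //; apply: linv_mul | apply: linv_0].
apply: polyh_and; first by apply: polyh_mxeq; [apply: linv_add => //; apply: linv_sub => //; apply: linv_mul | apply: linv_0].
do 8 (apply: polyh_and; first by apply: polyh_nonneg).
apply: polyh_and.
  apply: (@polyh_forall_nat _ _ N.+1 (fun n => (1 <= n <= N)%N)); first by move=> n; lia.
  by move=> n; apply: polyh_ge; [apply: lin_const0|].
apply: (@polyh_forall_nat _ _ N.+1 (fun n => (n <= N)%N)); first by move=> n; lia.
by move=> n; apply: polyh_and; apply: polyh_nonneg.
Qed.

End P.

Section F.
Variables (R : realFieldType) (K J : nat) (A : 'M[R]_(K, J)) (N : nat)
  (Ks : nat -> {set 'I_K}) (Js : nat -> {set 'I_J}) (v : nat -> pvar K J)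
  (xd : nat -> 'cV[R]_K) (qd : nat -> 'cV[R]_J).

Definition tauf (y : 'cV[R]_N) (m : nat) : R := \sum_(i < N) (m == i.+1)%:R * y i 0.

Lemma taufE (tau : nat -> R) m : (1 <= m <= N)%N -> tauf (\col_(i < N) tau i.+1) m = tau m.
Proof.
case: m => [//|k] /= hk.
rewrite /tauf (bigD1 (Ordinal hk)) //= big1 ?addr0; first by rewrite eqxx mxE mul1r.
move=> i hi; rewrite eqSS eq_sym.
have -> : ((i : nat) == k) = false.
  by apply/negbTE; move: hi; rewrite -val_eqE.
by rewrite mul0r.
Qed.

Lemma Phi_ext beta gamma T u0 uN qN q0 x0 xN p0 pN (tau tau' : nat -> R) :
  (forall m, (1 <= m <= N)%N -> tau m = tau' m) ->
  Phi A N Ks Js v xd qd beta gamma T u0 uN qN q0 x0 xN p0 pN tau ->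
  Phi A N Ks Js v xd qd beta gamma T u0 uN qN q0 x0 xN p0 pN tau'.
Proof.
move=> H.
have ex : forall n, (n <= N)%N -> xstate x0 xd tau n = xstate x0 xd tau' n.
  move=> n hn; rewrite /xstate; congr (_ + _); apply: eq_big_nat => m /andP [h1 h2].
  by rewrite H //; apply/andP; split; lia.
have eq : forall n, qstate N qN qd tau n = qstate N qN qd tau' n.
  move=> n; rewrite /qstate; congr (_ + _); apply: eq_big_nat => m /andP [h1 h2].
  by rewrite H //; apply/andP; split; lia.
move=> [Ha [Hb [c1 [c2 [c3 [c4 [c5 [c6 [c7 [c8 [d1 [d2 [e1 [e2
  [n1 [n2 [n3 [n4 [n5 [n6 [n7 [n8 [Ht Hl]]]]]]]]]]]]]]]]]]]]]]].
split.
  move=> n hn; rewrite -ex -?eq; [exact: Ha | lia].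
split.
  rewrite -Hb; apply: eq_big_nat => m /andP [h1 h2]; rewrite H //; apply/andP; split; lia.
do 10 (split; first by []).
split; first by rewrite -ex.
split; first by rewrite -eq.
do 8 (split; first by []).
split.
  by move=> n hn; rewrite -H //; apply: Ht.
by move=> n hn; rewrite -ex // -eq; apply: Hl.
Qed.

Notation X0 := (('cV[R]_K * 'cV[R]_J) * R^o)%type.
Notation W := ((((((((((X0 * 'cV[R]_J) * 'cV[R]_J) * 'cV[R]_J) * 'cV[R]_J)
   * 'cV[R]_K) * 'cV[R]_K) * 'cV[R]_K) * 'cV[R]_K) * 'cV[R]_N)%type).

Definition Body (w : W) : Prop :=
  0 <= w.1.1.1.1.1.1.1.1.1.2 /\
  Phi A N Ks Js v xd qd w.1.1.1.1.1.1.1.1.1.1.1 w.1.1.1.1.1.1.1.1.1.1.2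
   w.1.1.1.1.1.1.1.1.1.2 w.1.1.1.1.1.1.1.1.2 w.1.1.1.1.1.1.1.2
   w.1.1.1.1.1.1.2 w.1.1.1.1.1.2 w.1.1.1.1.2 w.1.1.1.2 w.1.1.2 w.1.2 (tauf w.2).

Lemma polyh_Body : polyh Body.
Proof.
apply: polyh_and.
  apply: polyh_ge; [exact: lin_const0 | by move=> a x y].
apply: polyh_Phi; try (by move=> a x y).
move=> m; rewrite /tauf; apply: lin_sumr => i; apply: lin_cmul.
by apply: lin_entry; move=> a x y.
Qed.

Lemma polyh_valid :
  polyh (fun z : X0 => validity_region A N Ks Js v xd qd z.1.1 z.1.2 z.2).
Proof.
have H := polyh_exV (polyh_exV (polyh_exV (polyh_exV (polyh_exV (polyh_exV
   (polyh_exV (polyh_exV (polyh_exV polyh_Body)))))))).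
apply: polyh_ext H _ => z; rewrite /validity_region bsE /Body /=; split.
- move=> [u0 [uN [qN [q0 [x0 [xN [p0 [pN [y [hT hP]]]]]]]]]].
  split => //; exists u0, uN, qN, q0, x0, xN, p0, pN, (tauf y); exact: hP.
- move=> [hT [u0 [uN [qN [q0 [x0 [xN [p0 [pN [tau hP]]]]]]]]]].
  exists u0, uN, qN, q0, x0, xN, p0, pN, (\col_(i < N) tau i.+1); split => //.
  by apply: Phi_ext hP => m hm; rewrite taufE.
Qed.

End F.

Section Fin2.
Variables (R : realFieldType) (K J : nat).
Notation X0 := (('cV[R]_K * 'cV[R]_J) * R^o)%type.

Lemma lin_cv n (g : 'cV[R]_n -> R) (x : 'cV[R]_n) :
  lin g -> g x = \sum_i x i 0 * g (delta_mx i 0).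
Proof.
move=> h; rewrite {1}(matrix_sum_delta x) lin_sum //.
by apply: eq_bigr => i _; rewrite big_ord1 linZ.
Qed.

Lemma dec3 (f : X0 -> R) (b : 'cV[R]_K) (g : 'cV[R]_J) (T : R) : lin f ->
  f ((b, g), T) = \sum_i b i 0 * f ((delta_mx i 0, 0), 0)
    + \sum_j g j 0 * f ((0, delta_mx j 0), 0) + T * f ((0, 0), 1).
Proof.
move=> h.
have -> : ((b, g), T) = ((b, 0), 0) + ((0, g), 0) + T *: ((0, 0), 1) :> X0.
  change (((b, g), T) = ((b + 0 + T *: 0, 0 + g + T *: 0), 0 + 0 + T * 1) :> X0).
  by rewrite !scaler0; congr (_, _, _); rewrite ?addr0 ?add0r ?mulr1.
rewrite !linD // linZ //.
have l1 : lin (fun x : 'cV[R]_K => f ((x, 0), 0)).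
  apply: lin_comp h => a x y.
  change (((a *: x + y, 0), 0) = ((a *: x + y, a *: 0 + 0), a * 0 + 0) :> X0).
  by rewrite scaler0 mulr0 !addr0.
have l2 : lin (fun x : 'cV[R]_J => f ((0, x), 0)).
  apply: lin_comp h => a x y.
  change (((0, a *: x + y), 0) = ((a *: 0 + 0, a *: x + y), a * 0 + 0) :> X0).
  by rewrite scaler0 mulr0 !addr0.
by rewrite (lin_cv b l1) (lin_cv g l2).
Qed.

Lemma cone_of (S : 'cV[R]_K -> 'cV[R]_J -> R -> Prop) :
  polyh (fun z : X0 => S z.1.1 z.1.2 z.2) -> polyhedral_cone S.
Proof.
move=> [s [Hl He]].
pose m := List.length s.
pose fk (k : 'I_m) := List.nth k s (fun _ => 0).
have Lk : forall k, lin (fk k).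
  move=> k; apply: Hl; apply: List.nth_In; exact: (elimT ssrnat.ltP (ltn_ord k)).
exists m, (\matrix_(k, i) fk k ((delta_mx i 0, 0), 0)),
  (\matrix_(k, j) fk k ((0, delta_mx j 0), 0)), (\col_k fk k ((0, 0), 1)).
move=> b g T.
have key : forall k, ((\matrix_(k, i) fk k ((delta_mx i 0, 0), 0)) *m b +
  (\matrix_(k, j) fk k ((0, delta_mx j 0), 0)) *m g + T *: (\col_k fk k ((0, 0), 1))) k 0
   = fk k ((b, g), T).
  move=> k; rewrite (dec3 _ _ _ (Lk k)) !mxE.
  congr (_ + _ + _); apply: eq_bigr => i _; by rewrite !mxE mulrC.
rewrite (He ((b, g), T)) /holds; split.
- move=> h k; rewrite key; apply: h; apply: List.nth_In; exact: (elimT ssrnat.ltP (ltn_ord k)).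
- move=> h f hf; have [k [hk <-]] := List.In_nth s f (fun _ => 0) hf.
  have := h (Ordinal (introT ssrnat.ltP hk)); rewrite key //.
Qed.

Lemma convex_of (S : 'cV[R]_K -> 'cV[R]_J -> R -> Prop) :
  polyh (fun z : X0 => S z.1.1 z.1.2 z.2) -> convex3 S.
Proof.
move=> [s [Hl He]] b1 g1 T1 b2 g2 T2 l /andP [l0 l1] h1 h2.
apply: (proj2 (He ((l *: b1 + (1 - l) *: b2, l *: g1 + (1 - l) *: g2), l * T1 + (1 - l) * T2))).
move=> f hf.
have -> : ((l *: b1 + (1 - l) *: b2, l *: g1 + (1 - l) *: g2), l * T1 + (1 - l) * T2)
   = l *: (((b1, g1), T1) : X0) + (1 - l) *: (((b2, g2), T2) : X0) :> X0 by [].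
rewrite linD ?linZ; try exact: Hl.
apply: addr_ge0; apply: mulr_ge0; rewrite ?subr_ge0 //.
- exact: (proj1 (He ((b1, g1), T1)) h1).
- exact: (proj1 (He ((b2, g2), T2)) h2).
Qed.

End Fin2.

Theorem mainTheorem6 (R : realFieldType) (K J : nat)
    (A : 'M[R]_(K, J)) (b : 'cV[R]_K) (c : 'cV[R]_J)
    (N : nat) (Ks : nat -> {set 'I_K}) (Js : nat -> {set 'I_J})
    (v : nat -> pvar K J) (u : nat -> 'cV[R]_J) (xd : nat -> 'cV[R]_K)
    (p : nat -> 'cV[R]_K) (qd : nat -> 'cV[R]_J) :
  base_sequence A b c N Ks Js v u xd p qd ->
  convex3 (validity_region A N Ks Js v xd qd) /\
  polyhedral_cone (validity_region A N Ks Js v xd qd).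
Proof.
move=> _; split; [apply: convex_of | apply: cone_of]; exact: polyh_valid.
Qed.
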